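(* A quasi-Brownian isometry $T\in\mathcal B(\mathcal H)$ satisfies the kernel condition $T^*T(\ker T^* )\subseteq\ker T^*$ if and only if $T$ is an isometry.
   Context: A $2$-isometry is $T$ with $I-2T^*T+T^{*2}T^2=0$. A quasi-Brownian isometry is a $2$-isometry with $\Delta_TT=\Delta_T^{1/2}T\Delta_T^{1/2}$ where $\Delta_T=T^*T-I$. *)

(* Defs.v *)
From Stdlib Require Import Reals.
Open Scope R_scope.

Record Cplx := mkC { re : R ; im : R }.
Definition C0 : Cplx := mkC 0 0.
Definition C1 : Cplx := mkC 1 0.
Definition RtoC (r : R) : Cplx := mkC r 0.
Definition Cadd (a b : Cplx) : Cplx := mkC (re a + re b) (im a + im b).
Definition Cmul (a b : Cplx) : Cplx :=
  mkC (re a * re b - im a * im b) (re a * im b + im a * re b).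
Definition Cconj (a : Cplx) : Cplx := mkC (re a) (- im a).

Record HilbertSpace := {
  carrier :> Type;
  vadd : carrier -> carrier -> carrier;
  vzero : carrier;
  vopp : carrier -> carrier;
  vscal : Cplx -> carrier -> carrier;
  inner : carrier -> carrier -> Cplx;
  vaddA : forall x y z, vadd x (vadd y z) = vadd (vadd x y) z;
  vaddC : forall x y, vadd x y = vadd y x;
  vadd0 : forall x, vadd x vzero = x;
  vaddN : forall x, vadd x (vopp x) = vzero;
  vscalA : forall a b x, vscal a (vscal b x) = vscal (Cmul a b) x;
  vscal1 : forall x, vscal C1 x = x;
  vscalDr : forall a x y, vscal a (vadd x y) = vadd (vscal a x) (vscal a y);
  vscalDl : forall a b x, vscal (Cadd a b) x = vadd (vscal a x) (vscal b x);
  (* inner product axioms (linear in the first argument) *)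
  inner_conj : forall x y, inner y x = Cconj (inner x y);
  inner_addl : forall x y z, inner (vadd x y) z = Cadd (inner x z) (inner y z);
  inner_scall : forall a x y, inner (vscal a x) y = Cmul a (inner x y);
  inner_pos : forall x, im (inner x x) = 0 /\ 0 <= re (inner x x);
  inner_def : forall x, inner x x = C0 -> x = vzero;
  complete : forall u : nat -> carrier,
    (forall eps, 0 < eps -> exists N, forall m n, (N <= m)%nat -> (N <= n)%nat ->
        sqrt (re (inner (vadd (u m) (vopp (u n))) (vadd (u m) (vopp (u n))))) < eps) ->
    exists l, forall eps, 0 < eps -> exists N, forall n, (N <= n)%nat ->
        sqrt (re (inner (vadd (u n) (vopp l)) (vadd (u n) (vopp l)))) < eps
}.

Arguments vadd {h}. Arguments vzero {h}. Arguments vopp {h}.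
Arguments vscal {h}. Arguments inner {h}.

Definition vsub {H : HilbertSpace} (x y : H) : H := vadd x (vopp y).
Definition hnorm {H : HilbertSpace} (x : H) : R := sqrt (re (inner x x)).

Definition linear_op {H : HilbertSpace} (T : H -> H) : Prop :=
  (forall x y, T (vadd x y) = vadd (T x) (T y)) /\
  (forall a x, T (vscal a x) = vscal a (T x)).

Definition bounded_op {H : HilbertSpace} (T : H -> H) : Prop :=
  linear_op T /\ exists M : R, forall x, hnorm (T x) <= M * hnorm x.

Definition is_adjoint {H : HilbertSpace} (Ts T : H -> H) : Prop :=
  forall x y, inner (T x) y = inner x (Ts y).

Definition positive_op {H : HilbertSpace} (S : H -> H) : Prop :=
  bounded_op S /\ forall x, im (inner (S x) x) = 0 /\ 0 <= re (inner (S x) x).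

Definition DeltaOp {H : HilbertSpace} (Ts T : H -> H) (x : H) : H :=
  vsub (Ts (T x)) x.

Definition two_isometry {H : HilbertSpace} (Ts T : H -> H) : Prop :=
  forall x, vadd (vsub x (vscal (RtoC 2) (Ts (T x)))) (Ts (Ts (T (T x)))) = vzero.

(* quasi-Brownian isometry: 2-isometry with Delta T = Delta^{1/2} T Delta^{1/2},
   where Sq is the positive square root of Delta *)
Definition quasi_Brownian {H : HilbertSpace} (Ts T Sq : H -> H) : Prop :=
  two_isometry Ts T /\ forall x, DeltaOp Ts T (T x) = Sq (T (Sq x)).

Definition kernel_condition {H : HilbertSpace} (Ts T : H -> H) : Prop :=
  forall x, Ts x = vzero -> Ts (Ts (T x)) = vzero.

Definition isometry {H : HilbertSpace} (Ts T : H -> H) : Prop :=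
  forall x, Ts (T x) = x.

(* Main.v *)
Require Import Defs.
From Stdlib Require Import Reals Lra.
Open Scope R_scope.

Definition Copp (a : Cplx) : Cplx := mkC (- re a) (- im a).

Lemma Ceq (a b : Cplx) : re a = re b -> im a = im b -> a = b.
Proof. destruct a, b; simpl; intros; subst; reflexivity. Qed.

Ltac cc := cbn [re im Cadd Copp Cmul Cconj C0 C1 RtoC] in *.
Ltac comp h := let h1 := fresh "h" in let h2 := fresh "h" in
  pose proof (f_equal re h) as h1; pose proof (f_equal im h) as h2; cc.

Lemma inner0l (H : HilbertSpace) (y : H) : inner vzero y = C0.
Proof.
  assert (E := inner_addl H vzero vzero y). rewrite vadd0 in E.
  comp E. apply Ceq; cc; lra.
Qed.

Lemma innerNl (H : HilbertSpace) (x y : H) : inner (vopp x) y = Copp (inner x y).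
Proof.
  assert (E := inner_addl H x (vopp x) y). rewrite vaddN, inner0l in E.
  comp E. apply Ceq; cc; lra.
Qed.

Lemma vext (H : HilbertSpace) (u v : H) : (forall y, inner u y = inner v y) -> u = v.
Proof.
  intro E. specialize (E (vadd u (vopp v))).
  assert (Z : inner (vadd u (vopp v)) (vadd u (vopp v)) = C0).
  { rewrite inner_addl, innerNl, E. apply Ceq; cc; lra. }
  apply inner_def in Z.
  rewrite <- (vadd0 H u), <- (vaddN H v), (vaddC H v), vaddA, Z, vaddC, vadd0. reflexivity.
Qed.

Lemma inner_addr (H : HilbertSpace) (x y z : H) :
  inner x (vadd y z) = Cadd (inner x y) (inner x z).
Proof.
  rewrite (inner_conj H (vadd y z) x), (inner_conj H y x), (inner_conj H z x), inner_addl.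
  apply Ceq; cc; lra.
Qed.

Lemma innerNr (H : HilbertSpace) (x y : H) : inner x (vopp y) = Copp (inner x y).
Proof.
  rewrite (inner_conj H (vopp y) x), (inner_conj H y x), innerNl.
  apply Ceq; cc; lra.
Qed.

Lemma inner0r (H : HilbertSpace) (x : H) : inner x vzero = C0.
Proof.
  rewrite (inner_conj H vzero x), inner0l. apply Ceq; cc; lra.
Qed.

Lemma inner_scalr (H : HilbertSpace) (a : Cplx) (x y : H) :
  inner x (vscal a y) = Cmul (Cconj a) (inner x y).
Proof.
  rewrite (inner_conj H (vscal a y) x), (inner_conj H y x), inner_scall.
  apply Ceq; cc; lra.
Qed.

Ltac ex := unfold vsub in *;
  repeat progress (rewrite ?inner_addl, ?innerNl, ?inner0l, ?inner_scall,
                   ?inner_addr, ?innerNr, ?inner0r, ?inner_scalr).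
Ltac exh h := unfold vsub in *;
  repeat progress (rewrite ?inner_addl, ?innerNl, ?inner0l, ?inner_scall,
                   ?inner_addr, ?innerNr, ?inner0r, ?inner_scalr in h).

Lemma lin_opp (H : HilbertSpace) (f : H -> H)
  (fadd : forall a b, f (vadd a b) = vadd (f a) (f b)) :
  forall a, f (vopp a) = vopp (f a).
Proof.
  intro a.
  assert (Z : f vzero = vzero).
  { apply vext; intro y. assert (E := fadd vzero vzero). rewrite vadd0 in E.
    apply (f_equal (fun z => inner z y)) in E. ex. exh E. comp E. apply Ceq; cc; lra. }
  assert (E := fadd a (vopp a)). rewrite vaddN, Z in E.
  apply vext; intro y. apply (f_equal (fun z => inner z y)) in E. ex. exh E. comp E.
  apply Ceq; cc; lra.
Qed.

Lemma core (H : HilbertSpace) (T Ts S D : H -> H)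
  (Tadd : forall a b, T (vadd a b) = vadd (T a) (T b))
  (Tsadd : forall a b, Ts (vadd a b) = vadd (Ts a) (Ts b))
  (Sadd : forall a b, S (vadd a b) = vadd (S a) (S b))
  (Sscal : forall c a, S (vscal c a) = vscal c (S a))
  (Dadd : forall a b, D (vadd a b) = vadd (D a) (D b))
  (adj : forall x y, inner (T x) y = inner x (Ts y))
  (TsT : forall v, Ts (T v) = vadd (D v) v)
  (F2 : forall v, Ts (D (T v)) = D v)
  (QB : forall v, D (T v) = S (T (S v)))
  (SS : forall v, S (S v) = D v)
  (Spos : forall z, im (inner (S z) z) = 0)
  (kern : forall x, Ts x = vzero -> Ts (Ts (T x)) = vzero)
  (w : H) : D w = vzero.
Proof.
  pose proof (lin_opp H Ts Tsadd) as Tsopp.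
  pose proof (lin_opp H D Dadd) as Dopp.
  assert (adjL : forall a u, inner (Ts a) u = inner a (T u)).
  { intros a u. rewrite (inner_conj H u (Ts a)), <- adj, (inner_conj H (T u) a). reflexivity. }
  assert (Dself : forall a b, inner (D a) b = inner a (D b)).
  { intros a b. pose proof (adjL (T a) b) as e1. rewrite TsT, inner_addl in e1.
    pose proof (eq_sym (adj a (T b))) as e2. rewrite TsT, inner_addr in e2.
    comp e1. comp e2. apply Ceq; lra. }
  assert (Sself : forall x y, inner (S x) y = inner x (S y)).
  { intros x y.
    pose proof (Spos x) as p1. pose proof (Spos y) as p2.
    pose proof (Spos (vadd x y)) as p3.
    pose proof (Spos (vadd x (vscal (mkC 0 1) y))) as p4.
    rewrite Sadd in p3, p4. rewrite Sscal in p4. exh p3. exh p4. cc.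
    rewrite (inner_conj H (S y) x). apply Ceq; cc; lra. }
  assert (K : forall v, Ts (D (D (T v))) = D (D v)).
  { intro v. apply vext; intro u.
    rewrite adjL, Dself, !QB, Sself, SS, adj, F2, <- (SS (S u)), <- Sself, !SS, <- Dself.
    reflexivity. }
  set (x := vadd (T (D w)) (vopp (vadd (D (T w)) (D (T (D w)))))).
  assert (X0 : Ts x = vzero).
  { unfold x. rewrite Tsadd, Tsopp, Tsadd, TsT, !F2.
    apply vext; intro y. ex. apply Ceq; cc; lra. }
  pose proof (kern x X0) as X1.
  rewrite TsT, Tsadd, X0, vadd0 in X1.
  unfold x in X1. rewrite Dadd, Dopp, Dadd, Tsadd, Tsopp, Tsadd, !F2, !K in X1.
  assert (D3 : D (D (D w)) = vzero).
  { apply vext; intro y. apply (f_equal (fun z => inner z y)) in X1. exh X1. ex.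
    comp X1. apply Ceq; cc; lra. }
  assert (DD : D (D w) = vzero).
  { apply inner_def. rewrite Dself, D3, inner0r. reflexivity. }
  apply inner_def. rewrite Dself, DD, inner0r. reflexivity.
Qed.

Theorem mainTheorem6 (H : HilbertSpace) (T Ts Sq : H -> H) :
  bounded_op T -> bounded_op Ts -> is_adjoint Ts T ->
  positive_op Sq -> (forall x, Sq (Sq x) = DeltaOp Ts T x) ->
  quasi_Brownian Ts T Sq ->
  (kernel_condition Ts T <-> isometry Ts T).
Proof.
  intros [[Tadd Tscal] _] [[Tsadd Tsscal] _] adj [[[Sadd Sscal] _] Spos] SS [two QB].
  pose proof (lin_opp H Ts Tsadd) as Tsopp.
  assert (TsT : forall v, Ts (T v) = vadd (DeltaOp Ts T v) v).
  { intro v. unfold DeltaOp. apply vext; intro y. ex. apply Ceq; cc; lra. }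
  split.
  - intros kern w.
    assert (Dw : DeltaOp Ts T w = vzero).
    { apply (core H T Ts Sq (DeltaOp Ts T)); auto.
      + intros a b. unfold DeltaOp, vsub. rewrite Tadd, Tsadd.
        apply vext; intro y. ex. apply Ceq; cc; lra.
      + intro v. unfold DeltaOp, vsub. rewrite Tsadd, Tsopp.
        apply vext; intro y. pose proof (f_equal (fun z => inner z y) (two v)) as E.
        cbv beta in E. exh E. ex. comp E. apply Ceq; cc; lra.
      + intro z. exact (proj1 (Spos z)). }
    rewrite TsT, Dw, vaddC, vadd0. reflexivity.
  - intros iso x Hx. rewrite iso. exact Hx.
Qed.
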